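(* Suppose that $\mathcal L,\mathcal K,\mathscr J_1,\mathscr J_2$ are subsets of $\{1,\dots,n\}$ such that $\mathcal K\supseteq\mathscr J_1\cup\mathscr J_2$ and $\mathcal L\supseteq\mathscr J_1\cap\mathscr J_2\cap\mathcal K$. Then $$L_{\mathscr J_1}\cdot L_{\mathscr J_2}\subseteq L_{\mathcal L}+I(A_{\mathcal K}).$$
   Context: $\mathbb K$ is a field, $R=\mathbb K[x_{i_1,\dots,i_n}:1\le i_j\le a_j]$, $A=(x_{i_1,\dots,i_n})$ the generic $a_1\times\dots\times a_n$ table. For a tuple $\sigma$ with $\sigma_j\in\{1,\dots,a_j\}\cup\{+\}$, $x_\sigma$ is the sum of all $x_{i_1,\dots,i_n}$ with $i_j=\sigma_j$ whenever $\sigma_j\ne+$. For $\mathscr J=\{j_1<\dots<j_m\}\subseteq\{1,\dots,n\}$ the margin $A_{\mathscr J}$ is the table whose $(i_1,\dots,i_m)$ entry is $x_\sigma$ with $\sigma_{j_r}=i_r$, $\sigma_j=+$ for $j\notin\mathscr J$; $L_{\mathscr J}$ is the ideal of $R$ generated by the entries of $A_{\mathscr J}$. For a table $B$ with entries in $R$, $I(B)$ is the ideal generated by all generalized $2\times2$ minors of $B$, i.e. determinants $\det\begin{pmatrix} b_{i_1,\dots,i_m} & b_{j_1,\dots,j_{l-1},i_l,j_{l+1},\dots,j_m}\\ b_{i_1,\dots,i_{l-1},j_l,i_{l+1},\dots,i_m} & b_{j_1,\dots,j_m}\end{pmatrix}$. *)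

(* Defs.v *)
From HB Require Import structures.
From mathcomp Require Import all_boot all_order all_algebra.
From mathcomp Require Import mpoly.
Set Implicit Arguments. Unset Strict Implicit. Unset Printing Implicit Defensive.
Import GRing.Theory.
Local Open Scope ring_scope.

(* Cell indices of the generic a_1 x ... x a_n table (0-based:
   coordinate j ranges over 'I_(a j) instead of {1,..,a_j}). *)
Definition cell (n : nat) (a : 'I_n -> nat) : finType :=
  {dffun forall j : 'I_n, 'I_(a j)}.

(* The polynomial ring R = K[x_t : t cell], variables indexed via enum_rank. *)
Definition polyR (K : fieldType) (n : nat) (a : 'I_n -> nat) :=
  {mpoly K[#|cell a|]}.

Definition xvar (K : fieldType) (n : nat) (a : 'I_n -> nat) (t : cell a)
  : polyR K a := 'X_(enum_rank t).

(* Entry of the margin A_J at (the J-coordinates of) t: the sum of x_u over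
   all cells u agreeing with t on the coordinates in J.  It only depends on
   the coordinates of t in J, so {margin J t | t} is exactly the set of
   entries of A_J. *)
Definition margin (K : fieldType) (n : nat) (a : 'I_n -> nat)
  (J : {set 'I_n}) (t : cell a) : polyR K a :=
  \sum_(u : cell a | [forall j in J, u j == t j]) xvar K u.

Definition setcoord (n : nat) (a : 'I_n -> nat) (s : cell a) (l : 'I_n)
  (t : cell a) : cell a :=
  [ffun k => if k == l then t k else s k].

Definition ideal_gen (R : comPzRingType) (S : R -> Prop) (p : R) : Prop :=
  exists s : seq (R * R),
    (forall q, q \in s -> S q.2) /\ p = \sum_(q <- s) q.1 * q.2.

Definition ideal_add (R : comPzRingType) (I J : R -> Prop) : R -> Prop :=
  ideal_gen (fun p => I p \/ J p).

Definition ideal_mul (R : comPzRingType) (I J : R -> Prop) : R -> Prop :=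
  ideal_gen (fun p => exists x y, I x /\ J y /\ p = x * y).

Definition Lideal (K : fieldType) (n : nat) (a : 'I_n -> nat)
  (J : {set 'I_n}) : polyR K a -> Prop :=
  ideal_gen (fun p => exists t : cell a, p = margin K J t).

(* Generalized 2x2 minor of A_Kc: for cells i, j and a direction l in Kc,
   det [[b_i, b_{j[l:=i_l]}], [b_{i[l:=j_l]}, b_j]]. *)
Definition gen_minor (K : fieldType) (n : nat) (a : 'I_n -> nat)
  (Kc : {set 'I_n}) (i j : cell a) (l : 'I_n) : polyR K a :=
  margin K Kc i * margin K Kc j
  - margin K Kc (setcoord j l i) * margin K Kc (setcoord i l j).

Definition Iminors (K : fieldType) (n : nat) (a : 'I_n -> nat)
  (Kc : {set 'I_n}) : polyR K a -> Prop :=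
  ideal_gen (fun p => exists (i j : cell a) (l : 'I_n),
                        l \in Kc /\ p = gen_minor K Kc i j l).

Arguments xvar K {n a} t.
Arguments margin K {n a} J t.
Arguments Lideal K {n a} J _.
Arguments gen_minor K {n a} Kc i j l.
Arguments Iminors K {n a} Kc _.

(* Main.v *)
Require Import Defs.
From HB Require Import structures.
From mathcomp Require Import all_boot all_order all_algebra.
From mathcomp Require Import mpoly.

Set Implicit Arguments. Unset Strict Implicit. Unset Printing Implicit Defensive.
Import GRing.Theory.
Local Open Scope ring_scope.

Section Ideals.
Variable R : comPzRingType.

Definition isIdeal (I : R -> Prop) :=
  [/\ I 0, (forall x y, I x -> I y -> I (x + y)) & (forall r x, I x -> I (r * x))].

Lemma ideal_gen_ideal S : isIdeal (ideal_gen S).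
Proof.
split.
- by exists [::]; rewrite big_nil.
- move=> x y [s1 [h1 ->]] [s2 [h2 ->]]; exists (s1 ++ s2); split; last by rewrite big_cat.
  by move=> q; rewrite mem_cat => /orP[/h1|/h2].
- move=> r x [s [h ->]]; exists [seq (r * q.1, q.2) | q <- s]; split.
    by move=> q /mapP[q' /h + ->].
  by rewrite big_map mulr_sumr; apply: eq_bigr => q _; rewrite mulrA.
Qed.

Lemma gen_sub (S : R -> Prop) x : S x -> ideal_gen S x.
Proof.
by move=> Sx; exists [:: (1, x)]; split; [move=> q; rewrite inE => /eqP ->|rewrite big_seq1 mul1r].
Qed.

Lemma ideal_gen_min (S I : R -> Prop) : isIdeal I -> (forall x, S x -> I x) ->
  forall p, ideal_gen S p -> I p.
Proof.
move=> [I0 ID IM] SI p [s [h ->]]; elim: s h => [|q s IH] h; first by rewrite big_nil.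
rewrite big_cons; apply: ID; last by apply: IH => q' hq; apply: h; rewrite inE hq orbT.
by apply: IM; apply: SI; apply: h; rewrite inE eqxx.
Qed.

Lemma ideal_sum (I : R -> Prop) (T : finType) (P : pred T) F : isIdeal I ->
  (forall i, P i -> I (F i)) -> I (\sum_(i | P i) F i).
Proof. by move=> [I0 ID IM] h; apply: big_ind. Qed.

End Ideals.

Section Main.
Variables (K : fieldType) (n : nat) (a : 'I_n -> nat).

Local Notation b := (margin K).

Definition agree (J : {set 'I_n}) (u v : cell a) := [forall j in J, u j == v j].

Lemma agreeP (J : {set 'I_n}) (u v : cell a) : reflect (forall j, j \in J -> u j = v j) (agree J u v).
Proof.
apply: (iffP forallP) => H j.
  by move=> jJ; apply/eqP; exact: (implyP (H j)).
by apply/implyP => /H ->.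
Qed.

Definition sw (D : {set 'I_n}) (k k' : cell a) : cell a :=
  [ffun j => if j \in D then k' j else k j].

Lemma swE (D : {set 'I_n}) (k k' : cell a) j : sw D k k' j = if j \in D then k' j else k j.
Proof. by rewrite ffunE. Qed.

Lemma marg_decomp (Kc J : {set 'I_n}) (s t : cell a) : J \subset Kc ->
  b J t = \sum_(k | agree (~: Kc) k s && agree J k t) b Kc k.
Proof.
move=> sJ; rewrite /margin.
rewrite (exchange_big_dep (fun u => agree J u t)) /=; last first.
  move=> k u /andP[_ /agreeP h1] /forallP h2; apply/agreeP => j jJ.
  have jK := subsetP sJ j jJ.
  by rewrite -h1 //; apply/eqP; exact: (implyP (h2 j)).
apply: eq_bigr => u Hu.
rewrite (big_pred1 (sw (~: Kc) u s)) // => k /=.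
apply/idP/eqP.
  move=> /andP[/andP[/agreeP h1 /agreeP h2] /forallP h3]; apply/ffunP => j.
  rewrite swE; case: ifP => hj; first exact: h1.
  by apply/esym/eqP; apply: (implyP (h3 j)); move: hj; rewrite in_setC; case: (j \in Kc).
move=> ->; apply/andP; split; first (apply/andP; split).
- by apply/agreeP => j hj; rewrite swE hj.
- apply/agreeP => j hj; rewrite swE in_setC (subsetP sJ j hj) /=.
  by move/agreeP: Hu; apply.
- by apply/forallP => j; apply/implyP => hj; rewrite swE in_setC hj.
Qed.

Lemma sw0 (k k' : cell a) : sw set0 k k' = k.
Proof. by apply/ffunP => j; rewrite swE in_set0. Qed.

Lemma swK (D : {set 'I_n}) (k k' : cell a) : sw D (sw D k k') (sw D k' k) = k.
Proof. by apply/ffunP => j; rewrite !swE; case: (j \in D). Qed.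

Lemma swap_minor (Kc D : {set 'I_n}) (k k' : cell a) : D \subset Kc ->
  Iminors K Kc (b Kc k * b Kc k' - b Kc (sw D k k') * b Kc (sw D k' k)).
Proof.
have [m] := ubnP #|D|; elim: m D => // m IH D; rewrite ltnS => hD sDK.
have [I0 ID IM] := ideal_gen_ideal (fun p => exists (i j : cell a) (l : 'I_n),
                        l \in Kc /\ p = gen_minor K Kc i j l).
case: (set_0Vmem D) => [->|[l lD]]; first by rewrite !sw0 subrr; exact: I0.
set D' := D :\ l.
have hD' : (#|D'| < m)%N by apply: (leq_trans _ hD); rewrite (cardsD1 l D) lD.
have sD' : D' \subset Kc by apply: subset_trans sDK; apply: subsetDl.
set i := sw D' k k'; set j := sw D' k' k.
have -> : b Kc k * b Kc k' - b Kc (sw D k k') * b Kc (sw D k' k) =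
  (b Kc k * b Kc k' - b Kc i * b Kc j) +
  (b Kc i * b Kc j - b Kc (sw D k k') * b Kc (sw D k' k)) by rewrite addrA subrK.
apply: ID; first exact: IH.
apply: gen_sub; exists i, j, l; split; first exact: (subsetP sDK).
rewrite /gen_minor [X in _ - X]mulrC; congr (_ - _ * _); congr (b Kc _);
  apply/ffunP => x; rewrite /setcoord ffunE /i /j !swE;
  (case: eqP => [->|/eqP xl]; [by rewrite /D' setD11 lD|by rewrite /D' in_setD1 xl]).
Qed.

Lemma core (L Kc J1 J2 : {set 'I_n}) (s t : cell a) :
  (J1 :|: J2) \subset Kc -> (J1 :&: J2 :&: Kc) \subset L ->
  ideal_add (Lideal K L) (Iminors K Kc) (b J1 s * b J2 t).
Proof.
move=> sU sL.
have sJ1 : J1 \subset Kc by apply: subset_trans sU; apply: subsetUl.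
have sJ2 : J2 \subset Kc by apply: subset_trans sU; apply: subsetUr.
set D := J2 :\: J1; set M := J1 :&: J2.
have sD : D \subset Kc by apply: subset_trans sJ2; apply: subsetDl.
have sMK : M \subset Kc by apply: subset_trans sJ1; apply: subsetIl.
have sML : M \subset L by move: sL; rewrite (setIidPl sMK).
have [IA0 IAD IAM] := ideal_gen_ideal (fun p : polyR K a => Lideal K L p \/ Iminors K Kc p).
rewrite (marg_decomp s s sJ1) (marg_decomp s t sJ2) big_distrlr /= pair_big /=.
set S := (X in \sum_(p | X p) _).
set R := \sum_(p | S p) b Kc (sw D p.1 p.2) * b Kc (sw D p.2 p.1).
have E : forall x y : polyR K a, x = x - y + y by move=> x y; rewrite subrK.
pose T1 k := [&& agree (~: Kc) k s, agree J1 k s & agree D k t].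
pose T2 k := agree (~: Kc) k s && agree M k t.
have HR : R = (\sum_(k | T1 k) b Kc k) * (\sum_(k | T2 k) b Kc k).
  pose phi := fun p : cell a * cell a => (sw D p.1 p.2, sw D p.2 p.1).
  have phiK : involutive phi by case=> k k'; rewrite /phi /= !swK.
  rewrite big_distrlr /= pair_big /= [RHS](reindex_inj (inv_inj phiK)) /=.
  apply: eq_big => [[k k']|[k k'] _] /=; last by [].

  have nDK : forall j, j \in ~: Kc -> j \notin D.
    by move=> j; rewrite in_setC; apply: contra; apply: (subsetP sD).
  have nD1 : forall j, j \in J1 -> j \notin D by move=> j hj; rewrite /D in_setD hj.
  rewrite /S /T1 /T2 /=.
  apply/idP/idP.
    move=> /andP[/andP[/agreeP h1 /agreeP h2] /andP[/agreeP h3 /agreeP h4]].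
    apply/andP; split; [apply/and3P; split|apply/andP; split]; apply/agreeP => j hj; rewrite swE.
    - by rewrite (negbTE (nDK j hj)); exact: h1.
    - by rewrite (negbTE (nD1 j hj)); exact: h2.
    - by rewrite hj; apply: h4; move: hj; rewrite /D in_setD => /andP[].
    - by rewrite (negbTE (nDK j hj)); exact: h3.
    - move: hj; rewrite /M in_setI => /andP[hj1 hj2].
      by rewrite (negbTE (nD1 j hj1)); apply: h4.
  move=> /andP[/and3P[/agreeP h1 /agreeP h2 /agreeP h3] /andP[/agreeP h4 /agreeP h5]].
  apply/andP; split; apply/andP; split; apply/agreeP => j hj.
  - by have := h1 j hj; rewrite swE (negbTE (nDK j hj)).
  - by have := h2 j hj; rewrite swE (negbTE (nD1 j hj)).
  - by have := h4 j hj; rewrite swE (negbTE (nDK j hj)).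
  - case: (boolP (j \in J1)) => h1j.
      have jM : j \in M by rewrite /M in_setI h1j hj.
      by have := h5 j jM; rewrite swE (negbTE (nD1 j h1j)).
    have jD : j \in D by rewrite /D in_setD h1j hj.
    by have := h3 j jD; rewrite swE jD.
rewrite [X in ideal_add _ _ X](E _ R) {2}HR /R -sumrB.
apply: IAD.
  apply: (ideal_sum (ideal_gen_ideal _)) => p _.
  by apply: gen_sub; right; apply: swap_minor.
rewrite /T2 -(marg_decomp s t sMK) (marg_decomp s t sML).
apply: IAM; apply: gen_sub; left.
apply: (ideal_sum (ideal_gen_ideal _)) => k _.
by apply: gen_sub => /=; exists k.
Qed.

End Main.

Theorem proposition6p1 (K : fieldType) (n : nat) (a : 'I_n -> nat)
  (L Kc J1 J2 : {set 'I_n}) :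
  (J1 :|: J2) \subset Kc ->
  (J1 :&: J2 :&: Kc) \subset L ->
  forall p : polyR K a,
    ideal_mul (Lideal K J1) (Lideal K J2) p ->
    ideal_add (Lideal K L) (Iminors K Kc) p.
Proof.
move=> sU sL p.
have hI := ideal_gen_ideal (fun p : polyR K a => Lideal K L p \/ Iminors K Kc p).
apply: ideal_gen_min => // _ [x [y [hx [hy ->]]]].
pose I1 := fun x : polyR K a => forall y, Lideal K J2 y ->
  ideal_add (Lideal K L) (Iminors K Kc) (x * y).
have hI1 : isIdeal I1.
  case: hI => I0 ID IM; split.
  - by move=> y' _; rewrite mul0r.
  - by move=> x1 x2 h1 h2 y' hy'; rewrite mulrDl; apply: ID; [apply: h1|apply: h2].
  - by move=> r x1 h1 y' hy'; rewrite -mulrA; apply: IM; apply: h1.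
apply: (ideal_gen_min hI1 _ hx) hy => _ [s ->] y' hy'.
pose I2 := fun y : polyR K a => ideal_add (Lideal K L) (Iminors K Kc) (margin K J1 s * y).
have hI2 : isIdeal I2.
  case: hI => I0 ID IM; split.
  - by rewrite /I2 mulr0.
  - by move=> y1 y2 h1 h2; rewrite /I2 mulrDr; apply: ID.
  - by move=> r y1 h1; rewrite /I2 mulrCA; apply: IM.
apply: (ideal_gen_min hI2 _ hy') => _ [t ->].
exact: core.
Qed.
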